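(* Let $H=\sum_{a=1}^M H_a$ be a stoquastic frustration-free Hamiltonian on $\mathcal{Q}^n$ and let $\Pi_a$ be the spectral projector of $H_a$ onto its zero eigenvalue. Suppose $H|\psi\rangle=0$ for some non-negative state $|\psi\rangle$. If for some $x\in\mathcal{S}(\psi)$, $y\in\{0,1\}^n$ and $a\in\{1,\ldots,M\}$ one has $\langle y|H_a|x\rangle<0$, then $y\in\mathcal{S}(\psi)$ and $$\frac{\langle y|\psi\rangle}{\langle x|\psi\rangle}=\sqrt{\frac{\langle y|\Pi_a|y\rangle}{\langle x|\Pi_a|x\rangle}}.$$
   Context: $\mathcal{Q}^n=(\mathbb{C}^2)^{\otimes n}$ with standard basis $\{|x\rangle\}$, $x\in\{0,1\}^n$. $H=\sum_a H_a$ is a local Hamiltonian (each $H_a$ acts non-trivially on $O(1)$ qubits). It is stoquastic if each $H_a$ has real non-positive off-diagonal entries in the standard basis, and frustration-free if each $H_a$ is positive semidefinite and the ground-state of $H$ is a zero eigenvector of every $H_a$. A non-negative state is a normalized vector with real non-negative amplitudes in the standard basis; its support is $\mathcal{S}(\psi)=\{x:\langle x|\psi\rangle>0\}$. *)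

(* Defs.v *)
From HB Require Import structures.
From mathcomp Require Import all_boot all_order all_algebra.
Set Implicit Arguments. Unset Strict Implicit. Unset Printing Implicit Defensive.
Import Order.TTheory GRing.Theory Num.Theory.
Local Open Scope ring_scope.

(* Scalars: C is any numerically closed field (e.g. the complex numbers).
   In such a field, [z <= 0] means "z is real and non-positive" and
   [0 <= z] means "z is real and non-negative". *)

Section QubitDefs.
Variable C : numClosedFieldType.
Variable n : nat.

Definition bits := {ffun 'I_n -> bool}.

(* Vectors of Q^n = (C^2)^{⊗n} in the standard basis: <x|v> = v x. *)
Definition qvec := bits -> C.
(* Operators on Q^n in the standard basis: <x|A|y> = A x y. *)
Definition qop := bits -> bits -> C.

Definition apply_op (A : qop) (v : qvec) : qvec :=
  fun x => \sum_(y : bits) A x y * v y.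

Definition comp_op (A B : qop) : qop :=
  fun x z => \sum_(y : bits) A x y * B y z.

Definition sum_op (M : nat) (Hs : 'I_M -> qop) : qop :=
  fun x y => \sum_(a < M) Hs a x y.

Definition zero_vec (v : qvec) : Prop := forall x, v x = 0.

Definition inner (v w : qvec) : C := \sum_(x : bits) (v x)^* * w x.

Definition self_adjoint (A : qop) : Prop := forall x y, A y x = (A x y)^*.

Definition psd (A : qop) : Prop :=
  self_adjoint A /\ forall v : qvec, 0 <= inner v (apply_op A v).

Definition stoquastic (M : nat) (Hs : 'I_M -> qop) : Prop :=
  forall a x y, x != y -> Hs a x y <= 0.

Definition ground_state (A : qop) (g : qvec) : Prop :=
  ~ zero_vec g /\
  exists E : C, (forall x, apply_op A g x = E * g x) /\
    forall (E' : C) (v : qvec), ~ zero_vec v ->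
      (forall x, apply_op A v x = E' * v x) -> E <= E'.

Definition frustration_free (M : nat) (Hs : 'I_M -> qop) : Prop :=
  (forall a, psd (Hs a)) /\
  forall g, ground_state (sum_op Hs) g -> forall a, zero_vec (apply_op (Hs a) g).

(* P is the spectral projector of A onto its zero eigenvalue, i.e. the
   orthogonal projector (self_adjoint idempotent) whose range is ker A. *)
Definition zero_eig_projector (A P : qop) : Prop :=
  self_adjoint P /\ comp_op P P = P /\
  forall v : qvec, zero_vec (apply_op A v) <-> (forall x, apply_op P v x = v x).

Definition nonneg_state (psi : qvec) : Prop :=
  (forall x, 0 <= psi x) /\ inner psi psi = 1.

Definition qsupport (psi : qvec) : pred bits := fun x => 0 < psi x.

End QubitDefs.

(* Main.v *)
Require Import Defs.
From HB Require Import structures.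
From mathcomp Require Import all_boot all_order all_algebra.
From mathcomp Require Import ring.
Import Order.TTheory GRing.Theory Num.Theory.
Local Open Scope ring_scope.

Section Helpers.
Variable C : numClosedFieldType.
Variable n : nat.
Local Notation bits := (bits n).
Local Notation qvec := (qvec C n).
Local Notation qop := (qop C n).

Definition delta (e : bits) : qvec := fun z => (z == e)%:R.

Lemma apply_delta (A : qop) e z : apply_op A (delta e) z = A z e.
Proof.
rewrite /apply_op (bigD1 e) //= /delta eqxx mulr1 big1 ?addr0 // => t /negbTE ->.
by rewrite mulr0.
Qed.

Lemma inner_delta e (v : qvec) : inner (delta e) v = v e.
Proof.
rewrite /inner (bigD1 e) //= /delta eqxx conjC_nat mul1r big1 ?addr0 // => t /negbTE ->.
by rewrite conjC_nat mul0r.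
Qed.

Lemma diag_ge0 (A : qop) e : psd A -> 0 <= A e e.
Proof.
move=> [_ H]; have := H (delta e).
by rewrite (_ : inner _ _ = A e e) // inner_delta apply_delta.
Qed.

Lemma apply_lin (A : qop) (u d : qvec) t z :
  apply_op A (fun w => u w + t * d w) z = apply_op A u z + t * apply_op A d z.
Proof.
rewrite /apply_op mulr_sumr -big_split /=; apply: eq_bigr => w _; ring.
Qed.

Lemma inner_linl (u d w : qvec) t :
  inner (fun z => u z + t * d z) w = inner u w + t^* * inner d w.
Proof.
rewrite /inner mulr_sumr -big_split /=; apply: eq_bigr => z _.
rewrite rmorphD rmorphM /=; ring.
Qed.

Lemma inner_linr (u w1 w2 : qvec) t :
  inner u (fun z => w1 z + t * w2 z) = inner u w1 + t * inner u w2.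
Proof.
rewrite /inner mulr_sumr -big_split /=; apply: eq_bigr => z _; ring.
Qed.

Lemma inner_ext (u w1 w2 : qvec) : (forall z, w1 z = w2 z) -> inner u w1 = inner u w2.
Proof. by move=> H; apply: eq_bigr => z _; rewrite H. Qed.

Lemma psd_kernel (A : qop) (u : qvec) :
  psd A -> inner u (apply_op A u) = 0 -> forall e, apply_op A u e = 0.
Proof.
move=> hA hu e.
have hsa := hA.1.
set b := apply_op A u e.
set h := A e e.
have h0 : 0 <= h by apply: diag_ge0.
set s := (h + 1)^-1.
have s0 : 0 < s by rewrite invr_gt0 ltr_wpDl.
have sreal : s^* = s by apply: conj_Creal; apply: gtr0_real.
set t := - s * b.
have := hA.2 (fun z => u z + t * delta e z).
have Hc : inner u (apply_op A (delta e)) = b^*.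
  rewrite /inner /b [in RHS]/apply_op rmorph_sum; apply: eq_bigr => z _.
  by rewrite apply_delta hsa rmorphM /= mulrC.
rewrite (@inner_ext _ _ _ (apply_lin A u (delta e) t)).
rewrite inner_linl !inner_linr hu Hc !inner_delta apply_delta -/b -/h.
rewrite /t rmorphM rmorphN /= sreal.
have -> : 0 + - s * b * b^* + (- s * b^* * (b + - s * b * h))
   = s * (b * b^*) * (s * h - 2) by ring.
rewrite -mulrA pmulr_rge0 // => H.
have shle : s * h - 2 < 0.
  rewrite subr_lt0 (@le_lt_trans _ _ 1) //; last by rewrite ltr1n.
  by rewrite /s mulrC ler_pdivrMr ?mul1r ?lerDl // ltr_wpDl.
have H2 : b * b^* * (s * h - 2) = 0.
  apply/eqP; rewrite eq_le H andbT mulr_ge0_le0 ?mul_conjC_ge0 //.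
  exact: ltW.
move/eqP: H2; rewrite mulf_eq0 (negbTE (ltr0_neq0 shle)) orbF.
by rewrite mul_conjC_eq0 => /eqP.
Qed.


Lemma inner_self_ge0 (v : qvec) : 0 <= inner v v.
Proof. by apply: sumr_ge0 => z _; rewrite mulrC mul_conjC_ge0. Qed.

Lemma inner_self_eq0 (v : qvec) : inner v v = 0 -> forall z, v z = 0.
Proof.
move=> H z.
have hge : forall i, predT i -> 0 <= (v i)^* * v i.
  by move=> i _; rewrite mulrC mul_conjC_ge0.
have := @psumr_eq0P _ _ predT (fun i => (v i)^* * v i) hge H z isT.
by rewrite mulrC => /eqP; rewrite mul_conjC_eq0 => /eqP.
Qed.

Lemma ground_psi (M : nat) (Hs : 'I_M -> qop) (psi : qvec) x :
  (forall a, psd (Hs a)) -> zero_vec (apply_op (sum_op Hs) psi) -> psi x != 0 ->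
  ground_state (sum_op Hs) psi.
Proof.
move=> hpsd h0 hx; split.
  by move=> hz; move: hx; rewrite hz eqxx.
exists 0; split.
  by move=> z; rewrite h0 mul0r.
move=> E v hv hE.
have e1 : inner v (apply_op (sum_op Hs) v) = \sum_a inner v (apply_op (Hs a) v).
  rewrite /inner /apply_op /sum_op exchange_big /=; apply: eq_bigr => z _.
  rewrite -mulr_sumr; congr (_ * _).
  rewrite exchange_big /=; apply: eq_bigr => t _; by rewrite mulr_suml.
have e2 : inner v (apply_op (sum_op Hs) v) = E * inner v v.
  rewrite /inner mulr_sumr; apply: eq_bigr => z _; rewrite hE; ring.
have ge : 0 <= E * inner v v.
  by rewrite -e2 e1; apply: sumr_ge0 => a _; exact: (hpsd a).2.
have nz : inner v v != 0.
  apply/eqP => /inner_self_eq0 hz; exact: hv.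
have pos : 0 < inner v v by rewrite lt_def nz inner_self_ge0.
by rewrite -(pmulr_lge0 _ pos).
Qed.


Lemma key_rel (K : qop) (psi v : qvec) x y :
  psd K -> (forall z t, z != t -> K z t <= 0) ->
  zero_vec (apply_op K psi) -> zero_vec (apply_op K v) -> K x y < 0 ->
  psi x * v y = v x * psi y.
Proof.
move=> hpsd hsto hpsi hv hxy.
set w := fun z => psi x * v z - v x * psi z.
have hw : forall z, apply_op K w z = 0.
  move=> z.
  have -> : apply_op K w z = psi x * apply_op K v z - v x * apply_op K psi z.
    rewrite /apply_op !mulr_sumr -sumrB; apply: eq_bigr => t _; rewrite /w; ring.
  by rewrite hv hpsi !mulr0 subrr.
have hwx : w x = 0 by rewrite /w mulrC subrr.
set m := fun z => `|w z|.
have mreal : forall z, (m z)^* = m z by move=> z; apply: conj_Creal; apply: normr_real.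
have Q0 : inner m (apply_op K m) = 0.
  apply/le_anti; rewrite hpsd.2 andbT.
  have -> : 0 = 'Re (inner w (apply_op K w)).
    by rewrite /inner big1 ?raddf0 // => z _; rewrite hw mulr0.
  rewrite /inner raddf_sum; apply: ler_sum => z _.
  rewrite mreal /apply_op !mulr_sumr raddf_sum /=; apply: ler_sum => t _.
  case: (eqVneq z t) => [<-|hzt].
    have -> : (w z)^* * (K z z * w z) = K z z * `|w z| ^+ 2 by rewrite normCK; ring.
    have /Creal_ReP -> : K z z * `|w z| ^+ 2 \is Num.real.
      by rewrite rpredM ?rpredX ?normr_real // ger0_real // diag_ge0.
    by rewrite /m expr2 mulrCA.
  have hK := hsto z t hzt.
  have Kreal : K z t \is Num.real by apply: ler0_real.
  have -> : (w z)^* * (K z t * w t) = K z t * ((w z)^* * w t) by ring.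
  rewrite (ReMl Kreal).
  have -> : m z * (K z t * m t) = K z t * `|(w z)^* * w t|.
    by rewrite normrM norm_conjC /m; ring.
  apply: ler_wnM2l => //; exact: (leif_Re_Creal _).1.
have hk := @psd_kernel K m hpsd Q0 x.
have hF : forall t, predT t -> 0 <= - (K x t * m t).
  move=> t _; case: (eqVneq t x) => [->|htx].
    by rewrite /m hwx normr0 mulr0 oppr0.
  rewrite oppr_ge0; apply: mulr_le0_ge0; [apply: hsto; by rewrite eq_sym | exact: normr_ge0].
have hs : \sum_(t | predT t) - (K x t * m t) = 0.
  by rewrite sumrN; move: hk; rewrite /apply_op => ->; rewrite oppr0.
have := @psumr_eq0P _ _ predT _ hF hs y isT.
move/eqP; rewrite oppr_eq0 mulf_eq0 (negbTE (ltr0_neq0 hxy)) /= /m normr_eq0 /w.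
by rewrite subr_eq0 => /eqP.
Qed.

End Helpers.

Theorem lemma4p5 (C : numClosedFieldType) (n M : nat)
  (Hs : 'I_M -> qop C n) (Pi : 'I_M -> qop C n) (psi : qvec C n) :
  (forall a, self_adjoint (Hs a)) ->
  stoquastic Hs ->
  frustration_free Hs ->
  (forall a, zero_eig_projector (Hs a) (Pi a)) ->
  nonneg_state psi ->
  zero_vec (apply_op (sum_op Hs) psi) ->
  forall (x y : bits n) (a : 'I_M),
    x \in qsupport psi ->
    Hs a y x < 0 ->
    y \in qsupport psi /\
    psi y / psi x = sqrtC (Pi a y y / Pi a x x).
Proof.
move=> hsa hsto hff hP [hnn _] h0 x y a; rewrite !unfold_in /qsupport => hx hyx.
have hpsd := hff.1.
have hg := @ground_psi C n M Hs psi x hpsd h0 (lt0r_neq0 hx).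
have hK := hff.2 psi hg.
have hst : forall z t, z != t -> Hs a z t <= 0 by move=> z t; apply: hsto.
have hxy : Hs a x y < 0.
  by rewrite hsa conj_Creal // ltr0_real.
have hy : 0 < psi y.
  have e := hK a y; rewrite /apply_op (bigD1 y) //= in e.
  have S : \sum_(z | z != y) Hs a y z * psi z <= Hs a y x * psi x.
    have neq : x != y.
      apply/eqP => exy; subst x; have := @diag_ge0 C n (Hs a) y (hpsd a).
      by move=> h; have := lt_le_trans hyx h; rewrite ltxx.
    rewrite (bigD1 x) //= gerDl; apply: sumr_le0 => z /andP [zy zx].
    apply: mulr_le0_ge0; last exact: hnn.
    by apply: hst; rewrite eq_sym.
  rewrite lt_def hnn andbT; apply/eqP => py0.
  move: e; rewrite py0 mulr0 add0r => e.
  have : Hs a y x * psi x < 0 by rewrite pmulr_llt0.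
  by rewrite -e => h; have := le_lt_trans S h; rewrite ltxx.
split=> //.
have [Psa [Pidem Piff]] := hP a.
move: (Pi a) Psa Pidem Piff => P Psa Pidem Piff.
have hPpsi := (Piff psi).1 (hK a).
have col : forall z, psi x * P y z = P x z * psi y.
  move=> z; apply: (@key_rel C n (Hs a) psi (fun w => P w z) x y (hpsd a) hst (hK a) _ hxy).
  apply: (Piff _).2 => w.
  by rewrite (_ : apply_op _ _ _ = comp_op P P w z) // Pidem.
have Pxx_real : (P x x)^* = P x x by rewrite -Psa.
have Pxx0 : P x x != 0.
  apply/eqP => h.
  have e : \sum_u (P u x)^* * P u x = 0.
    transitivity (P x x); last exact: h.
    have := congr1 (fun f => f x x) Pidem; rewrite /comp_op /= => <-.
    by apply: eq_bigr => u _; rewrite [P x u]Psa.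
  have hge : forall u, (fun _ => true) u -> 0 <= (P u x)^* * P u x.
    by move=> u _; rewrite mulrC mul_conjC_ge0.
  have z0 : forall u, P x u = 0.
    move=> u; have := @psumr_eq0P _ _ (fun _ => true) _ hge e u isT.
    rewrite mulrC => /eqP; rewrite mul_conjC_eq0 => /eqP pu.
    by rewrite Psa pu conjC0.
  have := hPpsi x; rewrite /apply_op big1 => [h2|u _]; last by rewrite z0 mul0r.
  by move: hx; rewrite -h2 ltxx.
have psix0 : psi x != 0 by apply: lt0r_neq0.
have psireal : forall z, (psi z)^* = psi z by move=> z; apply: conj_Creal; apply: ger0_real.
have c1 := col y.
have c2 := col x.
have c2' : psi x * P x y = P x x * psi y.
  by move: (congr1 Num.conj_op c2); rewrite !rmorphM /= Pxx_real !psireal -Psa.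
have eq : P y y = P x x * psi y * psi y / (psi x * psi x).
  apply: (mulIf (mulf_neq0 psix0 psix0)); rewrite divfK ?mulf_neq0 //.
  have -> : P y y * (psi x * psi x) = psi x * (psi x * P y y) by ring.
  by rewrite c1 mulrA c2'.
rewrite eq.
have -> : P x x * psi y * psi y / (psi x * psi x) / P x x = (psi y / psi x) ^+ 2.
  by field; rewrite psix0 Pxx0.
by rewrite sqrCK // divr_ge0 // hnn.
Qed.
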